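(* For every tube $\mathcal T$, $\mathrm{fpdim}(\mathcal T)=1$.
   Context: $\Bbbk$ is algebraically closed. A tube (of rank $r\ge1$) is the $\Bbbk$-linear abelian category of finite-dimensional nilpotent representations of the quiver with $r$ vertices forming an oriented cycle (for $r=1$, one vertex with one loop). For a $\Bbbk$-linear abelian category $\mathcal C$: an object $M$ is a brick if $\mathrm{Hom}_{\mathcal C}(M,M)=\Bbbk$; a finite set $\phi=\{X_1,\dots,X_n\}$ of nonzero objects is a brick set if every $X_i$ is a brick and $\dim\mathrm{Hom}_{\mathcal C}(X_i,X_j)=\delta_{ij}$; its adjacency matrix is $C(\phi)=(\dim\mathrm{Ext}^1_{\mathcal C}(X_i,X_j))_{i,j}$; $\rho$ is the spectral radius; $\mathrm{fpdim}(\mathcal C)=\sup\{\rho(C(\phi)):\phi\text{ a brick set}\}$. *)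

(* Defs.v *)
From HB Require Import structures.
From mathcomp Require Import all_boot all_order all_algebra all_field.
Set Implicit Arguments. Unset Strict Implicit. Unset Printing Implicit Defensive.
Import Order.TTheory GRing.Theory Num.Theory.
Local Open Scope ring_scope.

(* A tube of rank r: nilpotent finite-dimensional representations of the
   cyclic quiver with vertices 'I_r and arrows i -> ordS i (a loop if r = 1).
   An object is encoded as a graded space k^n whose basis vector p sits at
   vertex [tlab p], together with the (row-vector convention) matrix [tmx]
   of all arrow maps, which has degree one and is nilpotent. *)
Record tube_obj (k : fieldType) (r : nat) := TubeObj {
  tdim : nat;
  tlab : 'I_tdim -> 'I_r;
  tmx : 'M[k]_tdim;
  tmx_deg : forall p q, tmx p q != 0 -> tlab q = ordS (tlab p);
  tmx_nil : tmx ^+ tdim = 0 }.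

Arguments tdim {k r} t.
Arguments tlab {k r} t _.
Arguments tmx {k r} t.

Section Tube.
Variables (k : fieldType) (r : nat).
Implicit Types M N : tube_obj k r.

(* graded linear maps of degree 0 (families of maps M_i -> N_i) *)
Definition deg0_space M N : {vspace 'M[k]_(tdim M, tdim N)} :=
  lker (linfun (fun F : 'M[k]_(tdim M, tdim N) =>
    \matrix_(p, q) (if tlab N q == tlab M p then 0 else F p q))).

(* graded linear maps of degree 1 (families M_i -> N_{ordS i}, one per arrow) *)
Definition deg1_space M N : {vspace 'M[k]_(tdim M, tdim N)} :=
  lker (linfun (fun F : 'M[k]_(tdim M, tdim N) =>
    \matrix_(p, q) (if tlab N q == ordS (tlab M p) then 0 else F p q))).

Definition tdelta M N (F : 'M[k]_(tdim M, tdim N)) : 'M[k]_(tdim M, tdim N) :=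
  tmx M *m F - F *m tmx N.

Definition homT M N : {vspace 'M[k]_(tdim M, tdim N)} :=
  (deg0_space M N :&: lker (linfun (@tdelta M N)))%VS.

Definition dimHom M N : nat := \dim (homT M N).

(* Ext^1_T(M,N) = cokernel of the standard (Ringel) map
   delta : (+)_i Hom(M_i,N_i) -> (+)_{a:i->j} Hom(M_i,N_j) *)
Definition dimExt M N : nat :=
  (\dim (deg1_space M N) - \dim (linfun (@tdelta M N) @: deg0_space M N))%N.

Definition is_brick M : Prop := dimHom M M = 1%N.

Definition brick_set (t : nat) (X : 'I_t -> tube_obj k r) : Prop :=
  (forall i, 0 < tdim (X i))%N /\ (forall i, is_brick (X i)) /\
  (forall i j, dimHom (X i) (X j) = (i == j) :> nat).

Definition adjacency (t : nat) (X : 'I_t -> tube_obj k r) : 'M[algC]_t :=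
  \matrix_(i, j) (dimExt (X i) (X j))%:R.

End Tube.

Definition spectral_radius (t : nat) (A : 'M[algC]_t) : algC :=
  \big[Num.max/0]_(z <- sval (closed_field_poly_normal (char_poly A))) `|z|.

Definition fpdim_values (k : fieldType) (r : nat) : algC -> Prop :=
  fun x => exists (t : nat) (X : 'I_t -> tube_obj k r),
    brick_set X /\ x = spectral_radius (adjacency X).

Definition is_sup (S : algC -> Prop) (x : algC) : Prop :=
  (forall y, S y -> y <= x) /\
  (forall e : algC, 0 < e -> exists y, S y /\ x - e < y).

(* Main.v *)
Require Import Defs.
From HB Require Import structures.
From mathcomp Require Import all_boot all_order all_algebra all_field.
From mathcomp Require Import zify.
Set Implicit Arguments. Unset Strict Implicit. Unset Printing Implicit Defensive.
Import Order.TTheory GRing.Theory Num.Theory.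
Local Open Scope ring_scope.

Lemma linfunE' (k : fieldType) (aT rT : vectType k) (f : aT -> rT) (lf : linear f) :
  linfun f =1 f.
Proof.
move=> v.
pose ff : {linear aT -> rT} := HB.pack f (GRing.isLinear.Build k aT rT _ f lf).
exact: (lfunE ff v).
Qed.

Definition maskf (k : fieldType) m n (P : 'I_m -> 'I_n -> bool) (F : 'M[k]_(m,n)) : 'M[k]_(m,n) :=
  \matrix_(p, q) (if P p q then 0 else F p q).

Lemma maskf_lin (k : fieldType) m n P : linear (@maskf k m n P).
Proof.
move=> a u v; apply/matrixP => p q; rewrite !mxE.
by case: (P p q); rewrite ?mulr0 ?addr0 // !mxE.
Qed.

Lemma mem_maskf (k : fieldType) m n P (F : 'M[k]_(m,n)) :
  (F \in lker (linfun (maskf P))) = [forall p, forall q, ~~ P p q ==> (F p q == 0)].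
Proof.
rewrite memv_ker linfunE'; last exact: maskf_lin.
apply/eqP/forallP => [H p|H]; last first.
  apply/matrixP => p q; rewrite !mxE; case: ifP => // nP.
  by have /forallP/(_ q) := H p; rewrite nP /= => /eqP.
apply/forallP => q; apply/implyP => nP.
by have /matrixP/(_ p q) := H; rewrite !mxE (negbTE nP) => ->.
Qed.

Section Dim.
Context (k : fieldType) (m n : nat) (P : 'I_m -> 'I_n -> bool).
Let A := [pred pq : 'I_m * 'I_n | P pq.1 pq.2].
Let K := #|A|.
Definition gmap (v : 'rV[k]_K) : 'M[k]_(m,n) :=
  \sum_(i < K) v 0 i *: delta_mx (enum_val i).1 (enum_val i).2.

Lemma gmap_lin : linear gmap.
Proof.
move=> a u v; rewrite /gmap scaler_sumr -big_split /=; apply: eq_bigr => i _.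
by rewrite !mxE scalerDl scalerA.
Qed.

Lemma gmapE v p q : gmap v p q =
  \sum_(i < K) v 0 i * ((enum_val i) == (p, q))%:R.
Proof.
rewrite /gmap summxE; apply: eq_bigr => i _; rewrite !mxE.
by rewrite [enum_val i]surjective_pairing xpair_eqE /= [p == _]eq_sym [q == _]eq_sym.
Qed.

Lemma gmap_out v p q : ~~ P p q -> gmap v p q = 0.
Proof.
move=> nP; rewrite gmapE big1 // => i _.
have : enum_val i \in A by exact: enum_valP.
case: eqP => [-> | _]; last by rewrite mulr0.
by rewrite inE /= (negbTE nP).
Qed.

Lemma gmap_in v i : gmap v (enum_val i).1 (enum_val i).2 = v 0 i.
Proof.
rewrite gmapE -surjective_pairing (bigD1 i) //= eqxx mulr1 big1 ?addr0 // => j ji.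
by rewrite (inj_eq enum_val_inj) (negbTE ji) mulr0.
Qed.

Lemma dim_mask : \dim (lker (linfun (@maskf k m n P))) = #|A|.
Proof.
have gl : linear gmap := gmap_lin.
have E : lker (linfun (@maskf k m n P)) = limg (linfun gmap).
  apply/eqP; rewrite eqEsubv; apply/andP; split; apply/subvP => F.
    rewrite mem_maskf => /forallP H.
    have -> : F = gmap (\row_i F (enum_val i).1 (enum_val i).2).
      apply/matrixP => p q; case Ppq: (P p q); last first.
        by rewrite gmap_out ?Ppq //; have /forallP/(_ q) := H p; rewrite Ppq => /eqP.
      have Apq : (p, q) \in A by rewrite inE.
      have := gmap_in (\row_i F (enum_val i).1 (enum_val i).2) (enum_rank_in Apq (p, q)).
      by rewrite mxE !(enum_rankK_in Apq Apq) /= => ->.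
    by rewrite -(linfunE' gl); apply: memv_img; exact: memvf.
  case/memv_imgP => v _ ->; rewrite (linfunE' gl) mem_maskf.
  by apply/forallP => p; apply/forallP => q; apply/implyP => nP; rewrite gmap_out.
rewrite E limg_dim_eq ?dimvf /dim /= ?dim_matrix ?mul1n //.
apply/eqP; rewrite -subv0; apply/subvP => v; rewrite memv_cap memv_ker memv0.
case/andP => _ /eqP; rewrite (linfunE' gl) => H.
apply/eqP/rowP => i; rewrite mxE -gmap_in H mxE //.
Qed.
End Dim.

Section Euler.
Context (k : fieldType) (r : nat) (M N : tube_obj k r).

Lemma tdelta_lin : linear (@tdelta k r M N).
Proof.
move=> a u v; rewrite /tdelta mulmxDr mulmxDl -!scalemxAr -!scalemxAl.
by rewrite scalerBr opprD addrACA.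
Qed.

Definition cnt0 := #|[pred pq : 'I_(tdim M) * 'I_(tdim N) | tlab N pq.2 == tlab M pq.1]|.
Definition cnt1 := #|[pred pq : 'I_(tdim M) * 'I_(tdim N) | tlab N pq.2 == ordS (tlab M pq.1)]|.

Lemma dim_deg0 : \dim (deg0_space M N) = cnt0.
Proof. exact: (@dim_mask k _ _ (fun (p : 'I_(tdim M)) (q : 'I_(tdim N)) => tlab N q == tlab M p)). Qed.

Lemma dim_deg1 : \dim (deg1_space M N) = cnt1.
Proof. exact: (@dim_mask k _ _ (fun (p : 'I_(tdim M)) (q : 'I_(tdim N)) => tlab N q == ordS (tlab M p))). Qed.

Lemma img_sub : (linfun (@tdelta k r M N) @: deg0_space M N <= deg1_space M N)%VS.
Proof.
apply/subvP => G /memv_imgP [F HF ->]; rewrite (linfunE' tdelta_lin).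
move: HF; rewrite /deg0_space /deg1_space -[fun F : 'M_(_,_) => _]/(maskf _) mem_maskf.
move=> /forallP H0.
have H p q : tlab N q != tlab M p -> F p q = 0.
  by move=> nq; have /forallP/(_ q) := H0 p; rewrite nq => /eqP.
rewrite -[fun F : 'M_(_,_) => _]/(maskf _) mem_maskf.
apply/forallP => p; apply/forallP => q; apply/implyP => nq.
rewrite /tdelta !mxE !big1 ?subrr // => j _.
  case: (eqVneq (tmx N j q) 0) => [->|nz]; first by rewrite mulr0.
  rewrite H ?mul0r //; apply: contra nq => /eqP e.
  by rewrite (tmx_deg nz) e.
case: (eqVneq (tmx M p j) 0) => [->|nz]; first by rewrite mul0r.
by rewrite H ?mulr0 // (tmx_deg nz).
Qed.

Lemma euler : (dimHom M N + cnt1 = cnt0 + dimExt M N)%N.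
Proof.
rewrite /dimHom /dimExt -dim_deg0 -dim_deg1 /homT.
rewrite -(limg_ker_dim (linfun (@tdelta k r M N)) (deg0_space M N)).
have := dimvS img_sub.
by move=> le; rewrite -addnA subnKC.
Qed.
End Euler.

Lemma card_nat (T : finType) (P : {pred T}) : #|P| = (\sum_(x : T) (x \in P : nat))%N.
Proof. by rewrite -sum1_card big_mkcond /=; apply: eq_bigr => x _; case: (x \in P). Qed.

Lemma cnt_sum (k : fieldType) r (M N : tube_obj k r) (f : 'I_r -> 'I_r) :
  #|[pred pq : 'I_(tdim M) * 'I_(tdim N) | tlab N pq.2 == f (tlab M pq.1)]| =
  (\sum_v #|[pred p | tlab M p == v]| * #|[pred q | tlab N q == f v]|)%N.
Proof.
rewrite card_nat -(pair_big xpredT xpredT (fun p q => (tlab N q == f (tlab M p)) : nat)) /=.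
have H : forall v, (#|[pred p | tlab M p == v]| * #|[pred q | tlab N q == f v]| =
    \sum_p \sum_q ((tlab M p == v) * (tlab N q == f v)))%N.
  move=> v; rewrite !card_nat big_distrl /=; apply: eq_bigr => p _.
  by rewrite big_distrr /=; apply: eq_bigr => q _; rewrite !inE.
rewrite (eq_bigr _ (fun v _ => H v)) [RHS]exchange_big /=; apply: eq_bigr => p _.
rewrite [RHS]exchange_big /=; apply: eq_bigr => q _.
rewrite (bigD1 (tlab M p)) //= eqxx mul1n big1 ?addn0 // => v nv.
by rewrite [tlab M p == v]eq_sym (negbTE nv).
Qed.

Lemma sum_y (t r : nat) (a : 'I_t -> 'I_r -> nat) (w : 'I_t -> algC) (f : 'I_r -> 'I_r) :
  \sum_i \sum_j w i * w j * ((\sum_v a i v * a j (f v))%N)%:R =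
  \sum_v (\sum_i w i * (a i v)%:R) * (\sum_j w j * (a j (f v))%:R).
Proof.
under [RHS]eq_bigr => v _ do rewrite big_distrl /=.
rewrite [RHS]exchange_big /=; apply: eq_bigr => i _.
under [RHS]eq_bigr => v _ do rewrite big_distrr /=.
rewrite [RHS]exchange_big /=; apply: eq_bigr => j _.
rewrite natr_sum mulr_sumr; apply: eq_bigr => v _.
by rewrite natrM; rewrite !mulrA; congr (_ * _); rewrite -!mulrA; congr (_ * _); rewrite mulrC.
Qed.

Lemma quad0 (r : nat) (y : 'I_r -> algC) (hy : forall v, 0 <= y v) :
  \sum_v y v * y (ordS v) <= \sum_v y v * y v.
Proof.
have yr v : y v \is Num.real by apply: ger0_real.
suff : (\sum_v y v * y (ordS v)) *+ 2 <= (\sum_v y v * y v) *+ 2 by rewrite lerMn2r.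
have -> : (\sum_v y v * y v) *+ 2 = \sum_v y v ^+ 2 + \sum_v y (ordS v) ^+ 2.
  rewrite -(reindex_inj (@ordS_inj r) (F := fun v => y v ^+ 2) (P := xpredT)) -big_split /=.
  rewrite -sumrMnl; apply: eq_bigr => v _; by rewrite mulr2n -expr2.
rewrite -sumrMnl -big_split /=; apply: ler_sum => v _.
rewrite -subr_ge0.
have -> : y v ^+ 2 + y (ordS v) ^+ 2 - y v * y (ordS v) *+ 2 = (y v - y (ordS v)) ^+ 2.
  by rewrite sqrrB addrAC.
by rewrite -real_normK ?exprn_ge0 ?normr_ge0 // rpredB.
Qed.

Lemma quad (t r : nat) (a : 'I_t -> 'I_r -> nat) (w : 'I_t -> algC) (hw : forall i, 0 <= w i) :
  \sum_i \sum_j w i * w j * ((\sum_v a i v * a j (ordS v))%N)%:R <=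
  \sum_i \sum_j w i * w j * ((\sum_v a i v * a j v)%N)%:R.
Proof.
rewrite (sum_y a w (@ordS r)) (sum_y a w id).
apply: (quad0 (y := fun v => \sum_i w i * (a i v)%:R)) => v.
by apply: sumr_ge0 => i _; apply: mulr_ge0.
Qed.

Lemma Cij (k : fieldType) r t (X : 'I_t -> tube_obj k r) (HX : brick_set X) i j :
  adjacency X i j = (i == j)%:R + (cnt1 (X i) (X j))%:R - (cnt0 (X i) (X j))%:R :> algC.
Proof.
case: HX => _ [_ Hh]; rewrite mxE.
have := euler (X i) (X j); rewrite Hh => /(congr1 (fun n => n%:R : algC)).
by rewrite !natrD => ->; rewrite addrC addKr.
Qed.

Lemma eig_bound (k : fieldType) r t (X : 'I_t -> tube_obj k r) (HX : brick_set X) (z : algC) :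
  root (char_poly (adjacency X)) z -> `|z| <= 1.
Proof.
rewrite -eigenvalue_root_char => /eigenvalueP [v Hv nz].
set C := adjacency X.
pose w (i : 'I_t) : algC := `|v 0 i|.
have w0 i : 0 <= w i by apply: normr_ge0.
have Hj j : `|z| * w j <= \sum_i w i * C i j.
  have /matrixP/(_ 0 j) := Hv; rewrite !mxE /= => E.
  rewrite /w -normrM -E; apply: le_trans (ler_norm_sum _ _ _) _.
  apply: ler_sum => i _; rewrite normrM /C mxE normr_nat //.
pose a i v := #|[pred p | tlab (X i) p == v]|.
have c0 i j : cnt0 (X i) (X j) = (\sum_v a i v * a j v)%N.
  exact: (cnt_sum (X i) (X j) (fun x => x)).
have c1 i j : cnt1 (X i) (X j) = (\sum_v a i v * a j (ordS v))%N.
  exact: (cnt_sum (X i) (X j) (@ordS r)).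
set S := \sum_j w j * w j.
have key : `|z| * S <= S.
  apply: le_trans (_ : \sum_i \sum_j w i * w j * C i j <= S).
    rewrite /S mulr_sumr exchange_big /=; apply: ler_sum => j _.
    rewrite mulrA; apply: le_trans (_ : (\sum_i w i * C i j) * w j <= _).
      by apply: ler_wpM2r.
    rewrite mulr_suml; apply: ler_sum => i _; rewrite -!mulrA [C i j * _]mulrC //.
  under eq_bigr => i _ do under eq_bigr => j _ do rewrite Cij // mulrBr mulrDr.
  under eq_bigr => i _ do rewrite sumrB big_split /=.
  rewrite sumrB big_split /=.
  have -> : \sum_i \sum_j w i * w j * (i == j)%:R = S.
    apply: eq_bigr => i _; rewrite (bigD1 i) //= eqxx mulr1 big1 ?addr0 // => j ji.
    by rewrite eq_sym (negbTE ji) mulr0.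
  rewrite -addrA gerDl subr_le0.
  under eq_bigr => i _ do under eq_bigr => j _ do rewrite c1.
  under [X in _ <= X]eq_bigr => i _ do under eq_bigr => j _ do rewrite c0.
  exact: quad.
have S0 : 0 < S.
  rewrite lt_def sumr_ge0 ?andbT => [|j _]; last by rewrite mulr_ge0.
  apply/eqP => /eqP; rewrite psumr_eq0 => [|j _]; last by rewrite mulr_ge0.
  move/allP => H; apply/negP: nz; rewrite negbK; apply/eqP/rowP => j.
  have := H j (mem_index_enum j); rewrite mulf_eq0 orbb /w normr_eq0 mxE.
  by move=> /eqP.
by move: key; rewrite -{2}[S]mul1r ler_pM2r.
Qed.

Lemma inroots_root t (A : 'M[algC]_t) z :
  z \in sval (closed_field_poly_normal (char_poly A)) = root (char_poly A) z.
Proof.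
case: closed_field_poly_normal => s /= Es.
by rewrite [in RHS]Es (monicP (char_poly_monic A)) scale1r root_prod_XsubC.
Qed.

Lemma sr_le1 (k : fieldType) r t (X : 'I_t -> tube_obj k r) (HX : brick_set X) :
  spectral_radius (adjacency X) <= 1.
Proof.
rewrite /spectral_radius big_seq.
apply: (big_ind (fun x => x <= 1)) => [|x y hx hy|z]; first exact: ler01.
  by rewrite maxElt; case: ifP.
by rewrite inroots_root => /eig_bound; apply.
Qed.

(* the uniserial object of length r *)
Section Obj.
Variables (k : fieldType) (r' : nat).
Let r := r'.+1.
Definition Nmx : 'M[k]_r := \matrix_(p, q) ((q : nat) == p.+1)%:R.

Lemma Nmx_deg (p q : 'I_r) : Nmx p q != 0 -> (fun x : 'I_r => x) q = ordS ((fun x : 'I_r => x) p).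
Proof.
rewrite mxE; case H: (nat_of_ord q == p.+1); last by rewrite eqxx.
move=> _; move/eqP: H => e.
apply: val_inj => /=.
by rewrite modn_small -e.
Qed.

Lemma Nmx_pow e (p q : 'I_r) : (q < p + e)%N -> (Nmx ^+ e) p q = 0.
Proof.
elim: e p q => [|e IH] p q.
  rewrite addn0 expr0 mxE => lt.
  have /negbTE -> : p != q by apply: contraTneq lt => ->; rewrite ltnn.
  by [].
move=> lt; rewrite exprSr mxE big1 // => m _.
rewrite mxE; case: eqP => [e'|_]; last by rewrite mulr0.
by rewrite IH ?mul0r //; move: lt; rewrite e' addnS ltnS.
Qed.

Lemma Nmx_nil : Nmx ^+ r = 0.
Proof.
by apply/matrixP => p q; rewrite mxE Nmx_pow // (leq_trans (ltn_ord q)) // leq_addl.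
Qed.

Definition Eobj : tube_obj k r := TubeObj Nmx_deg Nmx_nil.
End Obj.



Section HomE.
Variables (k : fieldType) (r' : nat).
Let E := Eobj k r'.

Lemma mem_homT (F : 'M[k]_(tdim E, tdim E)) :
  (F \in homT E E) = [forall p, forall q, (q != p) ==> (F p q == 0)] && (tdelta F == 0).
Proof.
rewrite /homT memv_cap /deg0_space -[fun F : 'M_(_,_) => _]/(maskf _) mem_maskf.
by rewrite memv_ker (linfunE' (@tdelta_lin _ _ E E)).
Qed.

Lemma homE : dimHom E E = 1%N.
Proof.
rewrite /dimHom; have -> : homT E E = <[1%:M]>%VS.
  apply/eqP; rewrite eqEsubv; apply/andP; split; apply/subvP => F.
    rewrite mem_homT => /andP [/forallP H0 /eqP H1].
    have D p q : q != p -> F p q = 0.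
      by move=> nq; have /forallP/(_ q) := H0 p; rewrite nq => /eqP.
    have C : Nmx k r' *m F = F *m Nmx k r' by apply/eqP; rewrite -subr_eq0; apply/eqP.
    have step (p q : 'I_r'.+1) : (q : nat) = p.+1 -> F q q = F p p.
      move=> e; have /matrixP/(_ p q) := C.
      rewrite !mxE (bigD1 q) //= (bigD1 p (P := xpredT)) //= !mxE e !eqxx mul1r mulr1.
      rewrite !big1 ?addr0 // => m mp.
        by rewrite D ?mul0r.
      rewrite mxE; case: ((m : nat) =P p.+1) => [em|_]; last by rewrite mul0r.
      by case/negP: mp; apply/eqP/val_inj; rewrite /= em e.
    have all n (Hn : (n < r'.+1)%N) : F (Ordinal Hn) (Ordinal Hn) = F 0 0.
      elim: n Hn => [|n IH] Hn; first by congr (F _ _); apply: val_inj.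
      rewrite (step (Ordinal (ltnW Hn)) (Ordinal Hn)) //; exact: IH.
    apply/vlineP; exists (F 0 0); apply/matrixP => p q; rewrite !mxE.
    case: (eqVneq q p) => [->|nq].
      by rewrite mulr1; case: p => n Hn; exact: all.
    by rewrite D // mulr0.
  case/vlineP => c ->; rewrite mem_homT; apply/andP; split.
    apply/forallP => p; apply/forallP => q; apply/implyP => nq.
    rewrite !mxE; case: (p =P q) => [e|_]; last by rewrite mulr0n mulr0.
    by move: nq; rewrite e eqxx.
  by rewrite /tdelta scalemx1 -scalar_mxC subrr.
rewrite dim_vline; apply/eqP; rewrite eqb1.
by apply/eqP => /matrixP/(_ 0 0); rewrite !mxE eqxx => /eqP; rewrite oner_eq0.
Qed.

Lemma extE : dimExt E E = 1%N.
Proof.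
have := euler E E; rewrite homE.
have -> : cnt1 E E = cnt0 E E.
  rewrite /cnt0 /cnt1 (cnt_sum E E (@ordS _)) (cnt_sum E E (fun x => x)).
  have c1 v : #|[pred p : 'I_r'.+1 | p == v]| = 1%N.
    by rewrite -(card1 v); apply: eq_card => x; rewrite !inE.
  by apply: eq_bigr => v _; rewrite /= !c1.
by move/eqP; rewrite addnC eqn_add2l => /eqP <-.
Qed.
End HomE.

Lemma bigmax1 (s : seq algC) : (forall z, z \in s -> z = 1) -> s != [::] ->
  \big[Num.max/0]_(z <- s) `|z| = 1.
Proof.
elim: s => [|x s IH] //= H _; rewrite big_cons (H x (mem_head _ _)) normr1.
case: s IH H => [|y s] IH H; first by rewrite big_nil maxElt ltr10.
rewrite IH //; first by rewrite maxElt ltxx.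
by move=> z zs; apply: H; rewrite inE zs orbT.
Qed.

Lemma adjE (k : fieldType) r' : adjacency (fun _ : 'I_1 => Eobj k r') = 1%:M.
Proof.
by apply/matrixP => i j; rewrite !mxE extE !ord1 eqxx.
Qed.

Lemma sr_E (k : fieldType) r' : spectral_radius (adjacency (fun _ : 'I_1 => Eobj k r')) = 1.
Proof.
rewrite /spectral_radius adjE; apply: bigmax1.
  move=> z; rewrite inroots_root -eigenvalue_root_char => /eigenvalueP [v Hv nz].
  have /matrixP/(_ 0 0) := Hv; rewrite mul_mx_scalar scale1r !mxE => e.
  have v0 : v 0 0 != 0.
    apply: contra nz => /eqP v0; apply/eqP/matrixP => i j; rewrite !ord1 v0 mxE //.
  by apply: (mulIf v0); rewrite mul1r -e.
have : (1 : algC) \in sval (closed_field_poly_normal (char_poly (1%:M : 'M[algC]_1))).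
  rewrite inroots_root -eigenvalue_root_char; apply/eigenvalueP.
  exists (const_mx 1 : 'rV_1); first by rewrite mulmx1 scale1r.
  by apply/eqP => /matrixP/(_ 0 0); rewrite !mxE => /eqP; rewrite oner_eq0.
by case: (sval _).
Qed.

Theorem corollary5p2 (k : closedFieldType) (r : nat) (hr : (0 < r)%N) :
  is_sup (fpdim_values k r) 1.
Proof.
split.
  by move=> y [t [X [HX ->]]]; exact: sr_le1.
move=> e e0; exists 1; split; last by rewrite ltrBlDr ltrDl.
case: r hr => [//|r'] _.
exists 1%N, (fun _ => Eobj k r'); split; last by rewrite sr_E.
split; first by move=> i.
split; first by move=> i; exact: homE.
by move=> i j; rewrite homE !ord1.
Qed.
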